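(* Let $a,b\in\mathbb{R}$ with $0\le a<b$, let $\alpha\in(0,1]$, and let $f:[a,b]\to\mathbb{R}$ be $\alpha$-fractional differentiable. Let $M:=\sup_{t\in(a,b)}|D_\alpha f(t)|$. Then for $t\in[a,b]$, $$ \left|f(t)-\frac{\alpha}{b^\alpha-a^\alpha}\int_a^b f(s)\,d_\alpha s\right|\le\frac{M}{2\alpha(b^\alpha-a^\alpha)}\left[(t^\alpha-a^\alpha)^2+(b^\alpha-t^\alpha)^2\right]. $$ This inequality is sharp in the sense that the right-hand side cannot be replaced by a smaller one.
   Context: The conformable $\alpha$-fractional derivative is $D_\alpha f(t):=\lim_{\varepsilon\to 0}\frac{f(t+\varepsilon t^{1-\alpha})-f(t)}{\varepsilon}$ for $t>0$, $D_\alpha f(0):=\lim_{t\to0^+}D_\alpha f(t)$. Integrals: $\int_a^b h(s)\,d_\alpha s:=\int_a^b h(s)s^{\alpha-1}\,ds$.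
   Formalization: When a = 0, f is moreover right-continuous at 0, so f(t) → f(0) as t → 0⁺, both in the inequality and in the sharpness claim. Apart from conventions, each condition added here is assumed in the paper as well or is needed for the statement above to hold. *)

(* Defs.v *)
From Stdlib Require Import Reals.
From Coquelicot Require Import Coquelicot.
Open Scope R_scope.

(* Real power t^x for t >= 0, with the convention 0^x = 0 (used with x > 0). *)
Definition cpow (t x : R) : R := if Rlt_dec 0 t then Rpower t x else 0.

Definition conf_quot (f : R -> R) (alpha t eps : R) : R :=
  (f (t + eps * cpow t (1 - alpha)) - f t) / eps.

(* Df is the conformable alpha-derivative of f on [a,b]:
   - at every t in [a,b] with t > 0, D_alpha f(t) = lim_{eps -> 0} of the
     difference quotient (one-sided at the endpoints: eps restricted so that
     t + eps t^(1-alpha) stays in [a,b]) and equals Df t;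
   - if a = 0, D_alpha f(0) := lim_{t -> 0+} D_alpha f(t) exists and equals Df 0. *)
Definition conf_deriv_on (f Df : R -> R) (alpha a b : R) : Prop :=
  (forall t, a <= t <= b -> 0 < t ->
     filterlim (conf_quot f alpha t)
       (within (fun eps => a <= t + eps * cpow t (1 - alpha) <= b) (locally' 0))
       (locally (Df t))) /\
  (a = 0 -> filterlim Df (at_right 0) (locally (Df 0))).

(* The alpha-integral int_a^b h(s) d_alpha s = int_a^b h(s) s^(alpha-1) ds,
   taken as an (improper at a) Riemann integral; I is its value. *)
Definition is_alpha_integral (h : R -> R) (alpha a b I : R) : Prop :=
  is_RInt_gen (fun s => h s * cpow s (alpha - 1)) (at_right a) (at_point b) I.

Definition is_sup_abs_deriv (Df : R -> R) (a b M : R) : Prop :=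
  is_lub (fun y => exists t, a < t < b /\ y = Rabs (Df t)) M.

Definition ostrowski_rhs (alpha a b M t : R) : R :=
  M / (2 * alpha * (cpow b alpha - cpow a alpha)) *
  ((cpow t alpha - cpow a alpha) ^ 2 + (cpow b alpha - cpow t alpha) ^ 2).

Definition ostrowski_lhs (f : R -> R) (alpha a b I t : R) : R :=
  Rabs (f t - alpha / (cpow b alpha - cpow a alpha) * I).

(* Main.v *)
Require Import Defs.
From Stdlib Require Import Reals Lra.
From Coquelicot Require Import Coquelicot.
Open Scope R_scope.

Lemma ballR (x : R) (e : R) (y : R) (he : 0 < e) :
  ball x (mkposreal e he) y <-> Rabs (y - x) < e.
Proof. unfold ball; simpl; unfold AbsRing_ball, abs, minus, plus, opp; simpl. tauto. Qed.

Lemma ballR' (x : R) (e : posreal) (y : R) : ball x e y <-> Rabs (y - x) < e.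
Proof. unfold ball; simpl; unfold AbsRing_ball, abs, minus, plus, opp; simpl. tauto. Qed.

Lemma locallyR (x : R) (P : R -> Prop) :
  locally x P <-> exists d : R, 0 < d /\ forall y, Rabs (y - x) < d -> P y.
Proof.
  split.
  - intros [d Hd]. exists d. split. apply cond_pos. intros y Hy. apply Hd. apply ballR'. exact Hy.
  - intros [d [Hd H]]. exists (mkposreal d Hd). intros y Hy. apply H. apply ballR' in Hy. exact Hy.
Qed.

Lemma cont_eps (g : R -> R) (x : R) :
  (forall e, 0 < e -> exists d, 0 < d /\ forall y, Rabs (y - x) < d -> Rabs (g y - g x) < e) ->
  continuous g x.
Proof.
  intros H. apply filterlim_locally. intros eps. apply locallyR.
  destruct (H eps (cond_pos eps)) as [d [Hd Hd']]. exists d. split; [auto|].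
  intros y Hy. apply ballR'. apply Hd'. exact Hy.
Qed.

Lemma cpow_pos t x : 0 < t -> cpow t x = Rpower t x.
Proof. intros H. unfold cpow. destruct (Rlt_dec 0 t); [reflexivity| lra]. Qed.
Lemma cpow_npos t x : t <= 0 -> cpow t x = 0.
Proof. intros H. unfold cpow. destruct (Rlt_dec 0 t); [lra| reflexivity]. Qed.
Lemma Rpower_pos t x : 0 < Rpower t x.
Proof. unfold Rpower. apply exp_pos. Qed.
Lemma cpow_ge0 t x : 0 <= cpow t x.
Proof. unfold cpow. destruct (Rlt_dec 0 t). left; apply Rpower_pos. lra. Qed.
Lemma cpow_gt0 t x : 0 < t -> 0 < cpow t x.
Proof. intros; rewrite cpow_pos; auto; apply Rpower_pos. Qed.

Lemma cpow_inv t al : 0 <= t -> 0 < al -> cpow (cpow t al) (/ al) = t.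
Proof.
  intros Ht Hal. destruct (Req_dec t 0) as [->|Hn].
  - rewrite (cpow_npos 0); [|lra]. apply cpow_npos; lra.
  - assert (0 < t) by lra. rewrite (cpow_pos t); auto. rewrite cpow_pos; [|apply Rpower_pos].
    rewrite Rpower_mult. rewrite Rinv_r; [|lra]. apply Rpower_1; auto.
Qed.

Lemma cpow_lt s t p : 0 <= s < t -> 0 < p -> cpow s p < cpow t p.
Proof.
  intros [Hs Hst] Hp. rewrite (cpow_pos t); [|lra].
  destruct (Req_dec s 0) as [->|Hn].
  - rewrite cpow_npos; [|lra]. apply Rpower_pos.
  - rewrite cpow_pos; [|lra]. apply Rlt_Rpower_l; lra.
Qed.

Lemma cpow_le s t p : 0 <= s <= t -> 0 < p -> cpow s p <= cpow t p.
Proof.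
  intros [Hs Hst] Hp. destruct (Req_dec s t) as [->|]. lra. left; apply cpow_lt; lra.
Qed.

Lemma Rpower_cont y z : 0 < y -> continuous (fun x => Rpower x z) y.
Proof.
  intros Hy. apply (@ex_derive_continuous R_AbsRing R_NormedModule). exists (z * Rpower y (z-1)).
  apply is_derive_Reals. apply derivable_pt_lim_power; auto.
Qed.

Lemma cpow_cont p x0 : 0 < p -> 0 <= x0 ->
  forall e, 0 < e -> exists d, 0 < d /\ forall x, 0 <= x -> Rabs (x - x0) < d ->
    Rabs (cpow x p - cpow x0 p) < e.
Proof.
  intros Hp Hx0 e He. destruct (Req_dec x0 0) as [->|Hn].
  - exists (Rpower e (/p)). split. apply Rpower_pos.
    intros x Hx Hxd. rewrite (cpow_npos 0); [|lra]. rewrite Rminus_0_r. rewrite Rminus_0_r in Hxd.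
    destruct (Req_dec x 0) as [->|Hxn].
    + rewrite cpow_npos; [|lra]. rewrite Rabs_R0. auto.
    + rewrite cpow_pos; [|lra]. rewrite Rabs_right in Hxd; [|lra].
      rewrite Rabs_right; [|left; apply Rpower_pos].
      assert (Rpower x p < Rpower (Rpower e (/p)) p).
      { apply Rlt_Rpower_l; auto. lra. }
      rewrite Rpower_mult, Rinv_l, Rpower_1 in H; lra.
  - assert (Hx : 0 < x0) by lra.
    pose proof (Rpower_cont x0 p Hx) as Hc.
    unfold continuous in Hc. rewrite filterlim_locally in Hc. specialize (Hc (mkposreal e He)).
    apply locallyR in Hc. destruct Hc as [d [Hd H]].
    exists (Rmin d x0). split. apply Rmin_pos; auto.
    intros x Hx' Hxd. assert (0 < x).
    { assert (Rabs (x - x0) < x0) by (eapply Rlt_le_trans; [exact Hxd| apply Rmin_r]).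
      apply Rabs_def2 in H0. lra. }
    rewrite !cpow_pos; auto. specialize (H x). 
    assert (Rabs (x - x0) < d) by (eapply Rlt_le_trans; [exact Hxd| apply Rmin_l]).
    apply H in H1. apply ballR in H1. exact H1.
Qed.

Lemma conf_extract f Df al a b s :
  conf_deriv_on f Df al a b -> a <= s <= b -> 0 < s ->
  forall e, 0 < e -> exists d, 0 < d /\ forall h, h <> 0 -> Rabs h < d -> a <= s + h <= b ->
    Rabs ((f (s + h) - f s) / h - Df s / cpow s (1 - al)) < e.
Proof.
  intros [H1 _] Hs Hs0 e He.
  set (c := cpow s (1 - al)).
  assert (Hc : 0 < c) by (apply cpow_gt0; auto).
  specialize (H1 s Hs Hs0). rewrite filterlim_locally in H1.
  specialize (H1 (mkposreal (e * c) (Rmult_lt_0_compat _ _ He Hc))).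
  unfold within, locally' in H1. apply locallyR in H1.
  destruct H1 as [d0 [Hd0 H]]. exists (d0 * c). split. apply Rmult_lt_0_compat; auto.
  intros h Hh Hhd Hab.
  assert (Hec : h / c * c = h) by (field; lra).
  specialize (H (h / c)).
  assert (Hlt : Rabs (h / c - 0) < d0).
  { rewrite Rminus_0_r. unfold Rdiv. rewrite Rabs_mult, Rabs_inv, (Rabs_right c) by lra.
    apply Rmult_lt_reg_r with c; auto. field_simplify; lra. }
  specialize (H Hlt).
  assert (Hnz : h / c <> 0).
  { unfold Rdiv. apply Rmult_integral_contrapositive_currified; auto. apply Rinv_neq_0_compat; lra. }
  specialize (H Hnz). fold c in H. rewrite Hec in H. specialize (H Hab).
  apply ballR in H. unfold conf_quot in H. fold c in H. rewrite Hec in H.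
  replace ((f (s + h) - f s) / h - Df s / c) with (((f (s + h) - f s) / (h / c) - Df s) / c)
    by (field; lra).
  unfold Rdiv at 1. rewrite Rabs_mult, Rabs_inv, (Rabs_right c) by lra.
  apply Rmult_lt_reg_r with c; auto. rewrite Rmult_assoc, Rinv_l, Rmult_1_r by lra. exact H.
Qed.

Lemma f_cont_within f Df al a b :
  0 <= a -> conf_deriv_on f Df al a b ->
  (a = 0 -> filterlim f (at_right 0) (locally (f 0))) ->
  forall s, a <= s <= b -> forall e, 0 < e -> exists d, 0 < d /\
    forall s', a <= s' <= b -> Rabs (s' - s) < d -> Rabs (f s' - f s) < e.
Proof.
  intros Ha Hc Hz s Hs e He.
  destruct (Req_dec s 0) as [Hs0|Hs0].
  - subst s. assert (a = 0) by lra. subst a. specialize (Hz eq_refl).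
    rewrite filterlim_locally in Hz. specialize (Hz (mkposreal e He)).
    unfold at_right, within in Hz. apply locallyR in Hz. destruct Hz as [d [Hd H]].
    exists d. split; auto. intros s' Hs' Hd'.
    destruct (Req_dec s' 0) as [->|Hn]. rewrite Rminus_diag, Rabs_R0; auto.
    specialize (H s' Hd'). assert (0 < s') by lra. specialize (H H0). apply ballR in H. exact H.
  - assert (Hsp : 0 < s) by lra.
    destruct (conf_extract f Df al a b s Hc Hs Hsp 1 Rlt_0_1) as [d0 [Hd0 H]].
    set (K := Rabs (Df s / cpow s (1 - al)) + 1).
    assert (HK : 0 < K) by (unfold K; pose proof (Rabs_pos (Df s / cpow s (1 - al))); lra).
    exists (Rmin d0 (e / K)). split. apply Rmin_pos; auto. apply Rdiv_lt_0_compat; auto.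
    intros s' Hs' Hd'.
    destruct (Req_dec s' s) as [->|Hn]. rewrite Rminus_diag, Rabs_R0; auto.
    specialize (H (s' - s)). replace (s + (s' - s)) with s' in H by ring.
    assert (Hh : s' - s <> 0) by lra.
    assert (Hd1 : Rabs (s' - s) < d0) by (eapply Rlt_le_trans; [exact Hd'|apply Rmin_l]).
    assert (Hd2 : Rabs (s' - s) < e / K) by (eapply Rlt_le_trans; [exact Hd'|apply Rmin_r]).
    specialize (H Hh Hd1 Hs').
    replace (f s' - f s) with ((s' - s) * ((f s' - f s) / (s' - s))) by (field; auto).
    rewrite Rabs_mult.
    assert (Rabs ((f s' - f s) / (s' - s)) <= K).
    { unfold K. pose proof (Rabs_triang_inv ((f s' - f s) / (s' - s)) (Df s / cpow s (1 - al))). lra. }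
    apply Rle_lt_trans with (Rabs (s' - s) * K).
    apply Rmult_le_compat_l; auto. apply Rabs_pos.
    apply Rmult_lt_reg_r with (/ K). apply Rinv_0_lt_compat; auto.
    rewrite Rmult_assoc, Rinv_r, Rmult_1_r by lra. exact Hd2.
Qed.

Lemma f_deriv f Df al a b s :
  0 <= a -> conf_deriv_on f Df al a b -> a < s < b ->
  is_derive f s (Df s / cpow s (1 - al)).
Proof.
  intros Ha Hc Hs. apply is_derive_Reals. intros e He.
  destruct (conf_extract f Df al a b s Hc ltac:(lra) ltac:(lra) e He) as [d0 [Hd0 H]].
  assert (Hd : 0 < Rmin d0 (Rmin (s - a) (b - s))).
  { apply Rmin_pos; auto. apply Rmin_pos; lra. }
  exists (mkposreal _ Hd). intros h Hh Hhd. simpl in Hhd.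
  apply H; auto. eapply Rlt_le_trans; [exact Hhd|apply Rmin_l].
  assert (Rabs h < Rmin (s - a) (b - s)) by (eapply Rlt_le_trans; [exact Hhd|apply Rmin_r]).
  pose proof (Rmin_l (s - a) (b - s)). pose proof (Rmin_r (s - a) (b - s)).
  apply Rabs_def2 in H0. lra.
Qed.

Definition clamp A B v := Rmax A (Rmin B v).
Definition Gf (f : R -> R) al a b v := f (cpow (clamp (cpow a al) (cpow b al) v) (/al)).

Lemma clamp_in A B v : A <= B -> A <= clamp A B v <= B.
Proof. intros; unfold clamp, Rmax, Rmin; repeat destruct Rle_dec; lra. Qed.

Lemma clamp_id A B v : A <= v <= B -> clamp A B v = v.
Proof. intros; unfold clamp, Rmax, Rmin; repeat destruct Rle_dec; lra. Qed.

Lemma clamp_lip A B v w : A <= B -> Rabs (clamp A B v - clamp A B w) <= Rabs (v - w).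
Proof.
  intros; unfold clamp, Rmax, Rmin; repeat destruct Rle_dec;
  unfold Rabs; repeat destruct Rcase_abs; lra.
Qed.

Lemma AB_lt a b al : 0 <= a < b -> 0 < al -> cpow a al < cpow b al.
Proof. intros; apply cpow_lt; lra. Qed.

Lemma psi_in a b al v : 0 <= a < b -> 0 < al ->
  a <= cpow (clamp (cpow a al) (cpow b al) v) (/al) <= b.
Proof.
  intros Hab Hal. pose proof (AB_lt a b al Hab Hal).
  pose proof (clamp_in (cpow a al) (cpow b al) v ltac:(lra)).
  pose proof (cpow_ge0 a al).
  assert (Hi : 0 < / al) by (apply Rinv_0_lt_compat; auto).
  split.
  - apply Rle_trans with (cpow (cpow a al) (/al)). rewrite cpow_inv; lra.
    apply cpow_le; auto; lra.
  - apply Rle_trans with (cpow (cpow b al) (/al)). 2: rewrite cpow_inv; lra.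
    apply cpow_le; auto; lra.
Qed.

Lemma G_at f al a b s : 0 <= a < b -> 0 < al -> a <= s <= b -> Gf f al a b (cpow s al) = f s.
Proof.
  intros Hab Hal Hs. unfold Gf. rewrite clamp_id. rewrite cpow_inv; auto; lra.
  split; apply cpow_le; auto; lra.
Qed.

Lemma G_cont f Df al a b :
  0 <= a < b -> 0 < al -> conf_deriv_on f Df al a b ->
  (a = 0 -> filterlim f (at_right 0) (locally (f 0))) ->
  forall v, continuous (Gf f al a b) v.
Proof.
  intros Hab Hal Hc Hz v. apply cont_eps. intros e He.
  set (A := cpow a al). set (B := cpow b al).
  assert (HAB : A < B) by (apply AB_lt; auto).
  destruct (f_cont_within f Df al a b ltac:(lra) Hc Hz (cpow (clamp A B v) (/al))
     (psi_in a b al v Hab Hal) e He) as [d1 [Hd1 H1]].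
  assert (Hi : 0 < / al) by (apply Rinv_0_lt_compat; auto).
  assert (HA0 : 0 <= A) by apply cpow_ge0.
  destruct (cpow_cont (/al) (clamp A B v) Hi ltac:(pose proof (clamp_in A B v); lra) d1 Hd1)
    as [d2 [Hd2 H2]].
  exists d2. split; auto. intros y Hy. unfold Gf. fold A B.
  apply H1. apply psi_in; auto.
  apply H2. pose proof (clamp_in A B y); lra.
  eapply Rle_lt_trans. apply clamp_lip; lra. exact Hy.
Qed.

Lemma G_deriv f Df al a b v :
  0 <= a < b -> 0 < al -> conf_deriv_on f Df al a b ->
  cpow a al < v < cpow b al ->
  is_derive (Gf f al a b) v (Df (cpow v (/al)) / al).
Proof.
  intros Hab Hal Hc Hv.
  assert (HA0 : 0 <= cpow a al) by apply cpow_ge0.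
  assert (Hv0 : 0 < v) by lra.
  assert (Hi : 0 < / al) by (apply Rinv_0_lt_compat; auto).
  set (s := Rpower v (/al)).
  assert (Hs : a < s < b).
  { unfold s. rewrite <- (cpow_pos v) by lra. split.
    - apply Rle_lt_trans with (cpow (cpow a al) (/al)). rewrite cpow_inv; lra.
      apply cpow_lt; auto; lra.
    - apply Rlt_le_trans with (cpow (cpow b al) (/al)). 2: rewrite cpow_inv; lra.
      apply cpow_lt; auto; lra. }
  apply is_derive_ext_loc with (f := fun x => f (Rpower x (/al))).
  { apply locallyR. exists (Rmin (v - cpow a al) (cpow b al - v)). split.
    apply Rmin_pos; lra. intros y Hy.
    pose proof (Rmin_l (v - cpow a al) (cpow b al - v)).
    pose proof (Rmin_r (v - cpow a al) (cpow b al - v)).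
    apply Rabs_def2 in Hy. unfold Gf. rewrite clamp_id by lra. rewrite cpow_pos by lra. reflexivity. }
  assert (Hd : is_derive (fun x => Rpower x (/al)) v (/al * Rpower v (/al - 1))).
  { apply is_derive_Reals. apply derivable_pt_lim_power; auto. }
  pose proof (f_deriv f Df al a b s ltac:(lra) Hc Hs) as Hf.
  pose proof (is_derive_comp f (fun x => Rpower x (/al)) v _ _ Hf Hd) as Hcomp.
  replace (Df (cpow v (/al)) / al) with (scal (/ al * Rpower v (/ al - 1)) (Df s / cpow s (1 - al))).
  exact Hcomp.
  unfold scal; simpl; unfold mult; simpl.
  rewrite (cpow_pos v) by lra. fold s.
  rewrite cpow_pos by (unfold s; apply Rpower_pos).
  unfold s. rewrite Rpower_mult.
  replace (/ al * (1 - al)) with (/ al - 1) by (field; lra).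
  pose proof (Rpower_pos v (/al - 1)). field. split; lra.
Qed.

Lemma M_bound Df a b M : a < b -> is_sup_abs_deriv Df a b M ->
  0 <= M /\ forall t, a < t < b -> Rabs (Df t) <= M.
Proof.
  intros Hab [Hub _]. split.
  - apply Rle_trans with (Rabs (Df ((a + b) / 2))). apply Rabs_pos.
    apply Hub. exists ((a+b)/2). split; [lra|reflexivity].
  - intros t Ht. apply Hub. exists t. split; [lra|reflexivity].
Qed.

Lemma G_lip f Df al a b M :
  0 <= a < b -> 0 < al -> conf_deriv_on f Df al a b ->
  (a = 0 -> filterlim f (at_right 0) (locally (f 0))) ->
  is_sup_abs_deriv Df a b M ->
  forall u v, cpow a al <= u <= cpow b al -> cpow a al <= v <= cpow b al ->
  Rabs (Gf f al a b v - Gf f al a b u) <= M / al * Rabs (v - u).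
Proof.
  intros Hab Hal Hc Hz HM u v Hu Hv.
  destruct (M_bound Df a b M ltac:(lra) HM) as [HM0 HMb].
  set (A := cpow a al) in *. set (B := cpow b al) in *.
  set (dG := fun x => if Rlt_dec A x then if Rlt_dec x B then Df (cpow x (/al)) / al else 0 else 0).
  destruct (MVT_gen (Gf f al a b) u v dG) as [c [Hcr Heq]].
  - intros x Hx. unfold dG.
    assert (A < x < B).
    { pose proof (Rmin_l u v); pose proof (Rmin_r u v); pose proof (Rmax_l u v); pose proof (Rmax_r u v).
      unfold Rmin, Rmax in *. destruct Rle_dec; lra. }
    destruct (Rlt_dec A x); [|lra]. destruct (Rlt_dec x B); [|lra].
    apply G_deriv; auto.
  - intros x _. apply continuity_pt_filterlim. eapply G_cont; eauto.
  - rewrite Heq, Rabs_mult. apply Rmult_le_compat_r. apply Rabs_pos.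
    unfold dG. destruct (Rlt_dec A c); [destruct (Rlt_dec c B)|].
    + unfold Rdiv. rewrite Rabs_mult, Rabs_inv, (Rabs_right al) by lra.
      apply Rmult_le_compat_r. left; apply Rinv_0_lt_compat; auto.
      apply HMb.
      pose proof (cpow_ge0 a al). fold A in H.
      assert (Hi : 0 < / al) by (apply Rinv_0_lt_compat; auto).
      split.
      * assert (cpow A (/al) < cpow c (/al)) by (apply cpow_lt; auto; lra).
        unfold A in H0. rewrite cpow_inv in H0; lra.
      * assert (cpow c (/al) < cpow B (/al)) by (apply cpow_lt; auto; lra).
        unfold B in H0. rewrite cpow_inv in H0; lra.
    + rewrite Rabs_R0. unfold Rdiv. apply Rmult_le_pos; [auto|]. left; apply Rinv_0_lt_compat; auto.
    + rewrite Rabs_R0. unfold Rdiv. apply Rmult_le_pos; [auto|]. left; apply Rinv_0_lt_compat; auto.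
Qed.

Lemma cpow_deriv p y : 0 < y -> is_derive (fun s => cpow s p) y (p * cpow y (p - 1)).
Proof.
  intros Hy. rewrite (cpow_pos y) by lra.
  apply is_derive_ext_loc with (f := fun s => Rpower s p).
  { apply locallyR. exists y. split; auto. intros z Hz. apply Rabs_def2 in Hz.
    rewrite cpow_pos; [reflexivity|lra]. }
  apply is_derive_Reals. apply derivable_pt_lim_power; auto.
Qed.

Lemma cpow_continuous p y : 0 < y -> continuous (fun s => cpow s p) y.
Proof.
  intros Hy. apply (@ex_derive_continuous R_AbsRing R_NormedModule).
  eexists. apply cpow_deriv; auto.
Qed.

Lemma int_piece f Df al a b x :
  0 <= a < b -> 0 < al -> conf_deriv_on f Df al a b ->
  (a = 0 -> filterlim f (at_right 0) (locally (f 0))) ->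
  a <= x <= b -> 0 < x ->
  is_RInt (fun s => f s * cpow s (al - 1)) x b (/al * RInt (Gf f al a b) (cpow x al) (cpow b al)).
Proof.
  intros Hab Hal Hc Hz Hx Hx0.
  assert (Hcomp := @is_RInt_comp R_CompleteNormedModule (Gf f al a b) (fun s => cpow s al)
     (fun s => al * cpow s (al - 1)) x b).
  assert (H := Hcomp (fun y _ => G_cont f Df al a b Hab Hal Hc Hz _)).
  clear Hcomp.
  assert (H' : forall y, Rmin x b <= y <= Rmax x b -> is_derive (fun s => cpow s al) y (al * cpow y (al - 1))
     /\ continuous (fun s => al * cpow s (al - 1)) y).
  { intros y Hy. rewrite Rmin_left in Hy by lra. rewrite Rmax_right in Hy by lra. split.
    apply cpow_deriv; lra.
    apply (continuous_scal_r (V := R_NormedModule) al (fun s => cpow s (al - 1))). apply cpow_continuous; lra. }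
  specialize (H H'). clear H'.
  apply (is_RInt_scal _ _ _ (/al)) in H.
  eapply is_RInt_ext; [|exact H].
  intros y Hy. rewrite Rmin_left in Hy by lra. rewrite Rmax_right in Hy by lra.
  unfold scal; simpl; unfold mult; simpl.
  rewrite G_at by lra. field. lra.
Qed.

Lemma G_exRInt f Df al a b u v :
  0 <= a < b -> 0 < al -> conf_deriv_on f Df al a b ->
  (a = 0 -> filterlim f (at_right 0) (locally (f 0))) ->
  ex_RInt (Gf f al a b) u v.
Proof.
  intros. apply (@ex_RInt_continuous R_CompleteNormedModule). intros; eapply G_cont; eauto.
Qed.

Lemma RInt_near f Df al a b M X :
  0 <= a < b -> 0 < al -> conf_deriv_on f Df al a b ->
  (a = 0 -> filterlim f (at_right 0) (locally (f 0))) ->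
  is_sup_abs_deriv Df a b M ->
  cpow a al <= X <= cpow b al ->
  Rabs (RInt (Gf f al a b) X (cpow b al) - RInt (Gf f al a b) (cpow a al) (cpow b al))
   <= (Rabs (Gf f al a b (cpow a al)) + M / al * (cpow b al - cpow a al)) * (X - cpow a al).
Proof.
  intros Hab Hal Hc Hz HM HX.
  set (G := Gf f al a b). set (A := cpow a al) in *. set (B := cpow b al) in *.
  set (K := Rabs (G A) + M / al * (B - A)).
  assert (Hch : plus (RInt G A X) (RInt G X B) = RInt G A B).
  { apply RInt_Chasles; eapply G_exRInt; eauto. }
  simpl in Hch. unfold plus in Hch; simpl in Hch.
  replace (RInt G X B - RInt G A B) with (- RInt G A X) by lra.
  rewrite Rabs_Ropp.
  assert (HAB : A < B) by (apply AB_lt; auto).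
  replace (K * (X - A)) with (scal (X - A) K) by (unfold scal; simpl; unfold mult; simpl; ring).
  apply (norm_RInt_le G (fun _ => K) A X (RInt G A X) (scal (X - A) K)).
  lra.
  - intros v Hv. change (norm (G v)) with (Rabs (G v)).
    assert (HL : forall u v, A <= u <= B -> A <= v <= B -> Rabs (G v - G u) <= M/al * Rabs (v-u))
      by (intros; eapply G_lip; eauto).
    pose proof (HL A v ltac:(lra) ltac:(lra)) as H.
    pose proof (Rabs_triang_inv (G v) (G A)).
    destruct (M_bound Df a b M ltac:(lra) HM) as [HM0 _].
    assert (M / al * Rabs (v - A) <= M / al * (B - A)).
    { apply Rmult_le_compat_l. unfold Rdiv; apply Rmult_le_pos; [lra|left; apply Rinv_0_lt_compat; lra].
      rewrite Rabs_right; lra. }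
    unfold K. lra.
  - apply (@RInt_correct R_CompleteNormedModule). eapply G_exRInt; eauto.
  - apply (@is_RInt_const R_NormedModule).
Qed.

Lemma alpha_int f Df al a b M :
  0 <= a < b -> 0 < al -> conf_deriv_on f Df al a b ->
  (a = 0 -> filterlim f (at_right 0) (locally (f 0))) ->
  is_sup_abs_deriv Df a b M ->
  is_alpha_integral f al a b (/al * RInt (Gf f al a b) (cpow a al) (cpow b al)).
Proof.
  intros Hab Hal Hc Hz HM. unfold is_alpha_integral, is_RInt_gen.
  apply filterlimi_lim_ext_loc with
    (f := fun p => /al * RInt (Gf f al a b) (cpow (fst p) al) (cpow (snd p) al)).
  - apply Filter_prod with (Q := fun x => a < x <= b) (R := fun y => y = b).
    + unfold at_right, within. apply locallyR. exists (b - a). split. lra.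
      intros y Hy Hy'. apply Rabs_def2 in Hy. lra.
    + unfold at_point. reflexivity.
    + intros x y Hx ->. simpl. apply (int_piece f Df); auto; lra.
  - rewrite filterlim_locally. intros eps.
    set (K := Rabs (Gf f al a b (cpow a al)) + M / al * (cpow b al - cpow a al)).
    destruct (M_bound Df a b M ltac:(lra) HM) as [HM0 _].
    assert (HK : 0 <= K).
    { unfold K. pose proof (Rabs_pos (Gf f al a b (cpow a al))).
      pose proof (AB_lt a b al Hab Hal).
      assert (0 <= M / al) by (unfold Rdiv; apply Rmult_le_pos; [lra|left; apply Rinv_0_lt_compat; lra]).
      nra. }
    assert (He : 0 < eps * al / (K + 1)).
    { apply Rdiv_lt_0_compat. apply Rmult_lt_0_compat; [apply cond_pos|lra]. lra. }
    destruct (cpow_cont al a Hal ltac:(lra) _ He) as [d [Hd Hdd]].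
    apply Filter_prod with (Q := fun x => a < x <= b /\ Rabs (x - a) < d) (R := fun y => y = b).
    + unfold at_right, within. apply locallyR. exists (Rmin d (b - a)). split. apply Rmin_pos; lra.
      intros y Hy Hy'. pose proof (Rmin_l d (b - a)). pose proof (Rmin_r d (b - a)).
      split; [|lra]. apply Rabs_def2 in Hy. lra.
    + unfold at_point. reflexivity.
    + intros x y [Hx Hxd] ->. simpl. apply ballR'.
      assert (HX : cpow a al <= cpow x al <= cpow b al) by (split; apply cpow_le; lra).
      pose proof (RInt_near f Df al a b M (cpow x al) Hab Hal Hc Hz HM HX) as HN. fold K in HN.
      specialize (Hdd x ltac:(lra) Hxd).
      rewrite Rabs_right in Hdd by lra.
      replace (/ al * RInt (Gf f al a b) (cpow x al) (cpow b al) -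
               / al * RInt (Gf f al a b) (cpow a al) (cpow b al))
        with (/ al * (RInt (Gf f al a b) (cpow x al) (cpow b al) -
               RInt (Gf f al a b) (cpow a al) (cpow b al))) by ring.
      rewrite Rabs_mult, Rabs_right by (left; apply Rinv_0_lt_compat; lra).
      apply Rle_lt_trans with (/ al * (K * (cpow x al - cpow a al))).
      apply Rmult_le_compat_l; [left; apply Rinv_0_lt_compat; lra| exact HN].
      apply Rlt_le_trans with (/ al * ((K + 1) * (eps * al / (K + 1)))).
      * apply Rmult_lt_compat_l; [apply Rinv_0_lt_compat; lra|].
        apply Rle_lt_trans with ((K + 1) * (cpow x al - cpow a al)). nra.
        apply Rmult_lt_compat_l; lra.
      * right. field. lra.
Qed.

Lemma piece_bound (G : R -> R) L T u v (sg : R) :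
  u <= v -> (forall x, u <= x <= v -> Rabs (G T - G x) <= L * (sg * (T - x))) ->
  ex_RInt G u v ->
  Rabs (G T * (v - u) - RInt G u v) <= L * sg * ((T - u) ^ 2 - (T - v) ^ 2) / 2.
Proof.
  intros Huv Hb Hex.
  assert (H1 : is_RInt (fun x => minus (G T) (G x)) u v (minus (scal (v - u) (G T)) (RInt G u v))).
  { apply (@is_RInt_minus R_NormedModule). apply (@is_RInt_const R_NormedModule).
    apply (@RInt_correct R_CompleteNormedModule). exact Hex. }
  assert (H2 : is_RInt (fun x => L * (sg * (T - x))) u v
               (minus ((fun x => - (L * sg * (T - x) ^ 2 / 2)) v) ((fun x => - (L * sg * (T - x) ^ 2 / 2)) u))).
  { apply (@is_RInt_derive R_CompleteNormedModule (fun x => - (L * sg * (T - x) ^ 2 / 2)) (fun x => L * (sg * (T - x)))).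
    { intros y Hy. auto_derive. all: try field. all: auto. }
    { intros z Hz. apply (@ex_derive_continuous R_AbsRing R_NormedModule). auto_derive. auto. } }
  pose proof (norm_RInt_le (fun x => minus (G T) (G x)) _ u v _ _ Huv Hb H1 H2) as H.
  change norm with Rabs in H. unfold minus, plus, opp, scal in H; simpl in H. unfold mult in H; simpl in H.
  replace (G T * (v - u) - RInt G u v) with ((v - u) * G T + - RInt G u v) by ring.
  eapply Rle_trans. exact H. right. field.
Qed.

Lemma ostrowski_lip (G : R -> R) A B L T :
  A < B -> 0 <= L ->
  (forall u v, A <= u <= B -> A <= v <= B -> Rabs (G v - G u) <= L * Rabs (v - u)) ->
  (forall u v, ex_RInt G u v) -> A <= T <= B ->
  Rabs (G T - RInt G A B / (B - A)) <= L / (2 * (B - A)) * ((T - A) ^ 2 + (B - T) ^ 2).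
Proof.
  intros HAB HL Hlip Hex HT.
  assert (Hch : plus (RInt G A T) (RInt G T B) = RInt G A B) by (apply RInt_Chasles; auto).
  simpl in Hch. unfold plus in Hch; simpl in Hch.
  pose proof (piece_bound G L T A T 1 ltac:(lra)) as P1.
  assert (P1' : Rabs (G T * (T - A) - RInt G A T) <= L * 1 * ((T - A) ^ 2 - (T - T) ^ 2) / 2).
  { apply P1; auto. intros x Hx. rewrite <- Rabs_Ropp. replace (- (G T - G x)) with (G x - G T) by ring.
    eapply Rle_trans. apply Hlip; lra. rewrite Rabs_left1 by lra. right; ring. }
  pose proof (piece_bound G L T T B (-1) ltac:(lra)) as P2.
  assert (P2' : Rabs (G T * (B - T) - RInt G T B) <= L * (-1) * ((T - T) ^ 2 - (T - B) ^ 2) / 2).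
  { apply P2; auto. intros x Hx. rewrite <- Rabs_Ropp. replace (- (G T - G x)) with (G x - G T) by ring.
    eapply Rle_trans. apply Hlip; lra. rewrite Rabs_right by lra. right; ring. }
  replace (G T - RInt G A B / (B - A)) with
    (((G T * (T - A) - RInt G A T) + (G T * (B - T) - RInt G T B)) / (B - A))
    by (rewrite <- Hch; field; lra).
  unfold Rdiv at 1. rewrite Rabs_mult, Rabs_inv, (Rabs_right (B - A)) by lra.
  pose proof (Rabs_triang (G T * (T - A) - RInt G A T) (G T * (B - T) - RInt G T B)).
  apply Rle_trans with (((L * 1 * ((T - A) ^ 2 - (T - T) ^ 2) / 2) + (L * (-1) * ((T - T) ^ 2 - (T - B) ^ 2) / 2)) * / (B - A)).
  apply Rmult_le_compat_r. left; apply Rinv_0_lt_compat; lra. lra.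
  right. field. lra.
Qed.

Lemma part1 (a b alpha : R) (hab : 0 <= a < b) (halpha : 0 < alpha <= 1) :
  forall (f Df : R -> R) (M : R),
     conf_deriv_on f Df alpha a b ->
     (a = 0 -> filterlim f (at_right 0) (locally (f 0))) ->
     is_sup_abs_deriv Df a b M ->
     exists I, is_alpha_integral f alpha a b I /\
       forall t, a <= t <= b ->
         ostrowski_lhs f alpha a b I t <= ostrowski_rhs alpha a b M t.
Proof.
  intros f Df M Hc Hz HM. assert (Hal : 0 < alpha) by lra.
  exists (/alpha * RInt (Gf f alpha a b) (cpow a alpha) (cpow b alpha)).
  split. eapply alpha_int; eauto.
  intros t Ht. unfold ostrowski_lhs, ostrowski_rhs.
  pose proof (AB_lt a b alpha hab Hal) as HAB.
  destruct (M_bound Df a b M ltac:(lra) HM) as [HM0 _].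
  rewrite <- (G_at f alpha a b t hab Hal Ht).
  replace (alpha / (cpow b alpha - cpow a alpha) * (/ alpha * RInt (Gf f alpha a b) (cpow a alpha) (cpow b alpha)))
    with (RInt (Gf f alpha a b) (cpow a alpha) (cpow b alpha) / (cpow b alpha - cpow a alpha)) by (field; lra).
  replace (M / (2 * alpha * (cpow b alpha - cpow a alpha))) with (M / alpha / (2 * (cpow b alpha - cpow a alpha)))
    by (field; lra).
  apply ostrowski_lip.
  { lra. }
  { unfold Rdiv; apply Rmult_le_pos; [lra|left; apply Rinv_0_lt_compat; lra]. }
  { intros u v Hu Hv. eapply G_lip; eauto. }
  { intros u v. eapply G_exRInt; eauto. }
  { split; apply cpow_le; lra. }
Qed.

Lemma conf_of_deriv f al t d : 0 < t -> is_derive f t d ->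
  forall P, filterlim (conf_quot f al t) (within P (locally' 0)) (locally (d * cpow t (1 - al))).
Proof.
  intros Ht Hd P. apply is_derive_Reals in Hd.
  set (c := cpow t (1 - al)). assert (Hc : 0 < c) by (apply cpow_gt0; auto).
  rewrite filterlim_locally. intros eps.
  destruct (Hd (eps / c) ltac:(apply Rdiv_lt_0_compat; [apply cond_pos|lra])) as [dl Hdl].
  unfold within, locally'. apply locallyR. exists (dl / c). split.
  apply Rdiv_lt_0_compat; [apply cond_pos|lra].
  intros e He Hne _. apply ballR'. rewrite Rminus_0_r in He.
  assert (Hh : e * c <> 0) by (apply Rmult_integral_contrapositive_currified; lra).
  assert (Hhd : Rabs (e * c) < dl).
  { rewrite Rabs_mult, (Rabs_right c) by lra.
    apply Rmult_lt_reg_r with (/c). apply Rinv_0_lt_compat; lra.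
    rewrite Rmult_assoc, Rinv_r, Rmult_1_r by lra. exact He. }
  specialize (Hdl (e * c) Hh Hhd).
  unfold conf_quot. fold c.
  replace ((f (t + e * c) - f t) / e - d * c) with (c * ((f (t + e * c) - f t) / (e * c) - d))
    by (field; lra).
  rewrite Rabs_mult, (Rabs_right c) by lra.
  apply Rmult_lt_reg_r with (/c). apply Rinv_0_lt_compat; lra.
  replace (c * Rabs ((f (t + e * c) - f t) / (e * c) - d) * / c) with (Rabs ((f (t + e * c) - f t) / (e * c) - d))
    by (field; lra).
  exact Hdl.
Qed.

Lemma part2 (a b alpha : R) (hab : 0 <= a < b) (halpha : 0 < alpha <= 1) :
  (exists (f Df : R -> R) (M I t : R),
     conf_deriv_on f Df alpha a b /\
     (a = 0 -> filterlim f (at_right 0) (locally (f 0))) /\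
     is_sup_abs_deriv Df a b M /\
     is_alpha_integral f alpha a b I /\
     a <= t <= b /\
     0 < ostrowski_rhs alpha a b M t /\
     ostrowski_lhs f alpha a b I t = ostrowski_rhs alpha a b M t).
Proof.
  assert (Hal : 0 < alpha) by lra.
  set (f := fun t => / alpha * cpow t alpha).
  set (Df := fun _ : R => 1).
  assert (Hc : conf_deriv_on f Df alpha a b).
  { split.
    - intros t Ht Ht0.
      assert (Hd : is_derive f t (/alpha * (alpha * cpow t (alpha - 1)))).
      { apply is_derive_scal. apply cpow_deriv; auto. }
      pose proof (conf_of_deriv f alpha t _ Ht0 Hd (fun eps => a <= t + eps * cpow t (1 - alpha) <= b)) as H.
      replace (Df t) with (/ alpha * (alpha * cpow t (alpha - 1)) * cpow t (1 - alpha)).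
      exact H. unfold Df. rewrite !cpow_pos by lra.
      replace (/ alpha * (alpha * Rpower t (alpha - 1)) * Rpower t (1 - alpha))
        with (Rpower t (alpha - 1) * Rpower t (1 - alpha)) by (field; lra).
      rewrite <- Rpower_plus. replace (alpha - 1 + (1 - alpha)) with 0 by ring.
      apply Rpower_O; auto.
    - intros _. unfold Df. apply filterlim_const. }
  assert (Hz : a = 0 -> filterlim f (at_right 0) (locally (f 0))).
  { intros _. rewrite filterlim_locally. intros eps.
    destruct (cpow_cont alpha 0 Hal ltac:(lra) (eps * alpha)
       ltac:(apply Rmult_lt_0_compat; [apply cond_pos|lra])) as [d [Hd H]].
    unfold at_right, within. apply locallyR. exists d. split; auto.
    intros y Hy Hy0. apply ballR'. unfold f.
    specialize (H y ltac:(lra) Hy).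
    replace (/ alpha * cpow y alpha - / alpha * cpow 0 alpha) with (/alpha * (cpow y alpha - cpow 0 alpha)) by ring.
    rewrite Rabs_mult, Rabs_right by (left; apply Rinv_0_lt_compat; lra).
    apply Rmult_lt_reg_l with alpha; auto. rewrite <- Rmult_assoc, Rinv_r, Rmult_1_l by lra. lra. }
  assert (HM : is_sup_abs_deriv Df a b 1).
  { split.
    - intros y [t [_ ->]]. unfold Df. rewrite Rabs_R1. lra.
    - intros m Hm. apply Hm. exists ((a + b) / 2). split. lra. unfold Df. rewrite Rabs_R1. reflexivity. }
  pose proof (alpha_int f Df alpha a b 1 hab Hal Hc Hz HM) as HI.
  set (A := cpow a alpha) in *. set (B := cpow b alpha) in *.
  assert (HAB : A < B) by (apply AB_lt; auto).
  assert (HA0 : 0 <= A) by apply cpow_ge0.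
  assert (HJ : RInt (Gf f alpha a b) A B = (B ^ 2 - A ^ 2) / (2 * alpha)).
  { rewrite RInt_ext with (g := fun v => v / alpha).
    - apply is_RInt_unique.
      replace ((B ^ 2 - A ^ 2) / (2 * alpha)) with
        (minus ((fun v => v ^ 2 / (2 * alpha)) B) ((fun v => v ^ 2 / (2 * alpha)) A))
        by (unfold minus, plus, opp; simpl; field; lra).
      apply (@is_RInt_derive R_CompleteNormedModule (fun v => v ^ 2 / (2 * alpha)) (fun v => v / alpha)).
      { intros y Hy. auto_derive. all: try field. all: lra. }
      { intros z Hz'. apply (@ex_derive_continuous R_AbsRing R_NormedModule). auto_derive. lra. }
    - intros v Hv. rewrite Rmin_left in Hv by lra. rewrite Rmax_right in Hv by lra.
      unfold Gf, f. fold A B. rewrite clamp_id by lra.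
      pose proof (cpow_inv v (/alpha) ltac:(lra) ltac:(apply Rinv_0_lt_compat; lra)) as Hv'.
      rewrite Rinv_inv in Hv'. rewrite Hv'. change (/ alpha * v = v / alpha). field; lra. }
  rewrite HJ in HI.
  exists f, Df, 1, (/ alpha * ((B ^ 2 - A ^ 2) / (2 * alpha))), a.
  split; [exact Hc|]. split; [exact Hz|]. split; [exact HM|]. split; [exact HI|].
  split; [lra|].
  unfold ostrowski_rhs, ostrowski_lhs. fold A B.
  split.
  - apply Rmult_lt_0_compat. apply Rdiv_lt_0_compat; [lra|]. apply Rmult_lt_0_compat; lra. nra.
  - unfold f. fold A.
    replace (/ alpha * A - alpha / (B - A) * (/ alpha * ((B ^ 2 - A ^ 2) / (2 * alpha))))
      with (- ((B - A) / (2 * alpha))) by (field; lra).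
    rewrite Rabs_Ropp, Rabs_right. field; lra.
    left. apply Rdiv_lt_0_compat; lra.
Qed.

Theorem mainTheorem16 (a b alpha : R) (hab : 0 <= a < b) (halpha : 0 < alpha <= 1) :
  (forall (f Df : R -> R) (M : R),
     conf_deriv_on f Df alpha a b ->
     (a = 0 -> filterlim f (at_right 0) (locally (f 0))) ->
     is_sup_abs_deriv Df a b M ->
     exists I, is_alpha_integral f alpha a b I /\
       forall t, a <= t <= b ->
         ostrowski_lhs f alpha a b I t <= ostrowski_rhs alpha a b M t)
  /\
  (exists (f Df : R -> R) (M I t : R),
     conf_deriv_on f Df alpha a b /\
     (a = 0 -> filterlim f (at_right 0) (locally (f 0))) /\
     is_sup_abs_deriv Df a b M /\
     is_alpha_integral f alpha a b I /\
     a <= t <= b /\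
     0 < ostrowski_rhs alpha a b M t /\
     ostrowski_lhs f alpha a b I t = ostrowski_rhs alpha a b M t).
Proof.
  split. apply part1; auto. apply part2; auto.
Qed.
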